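(* Let $\mathcal{H}\subseteq\{0,1\}^{\mathcal{X}}$ be a concept class and let $\omega_m$ denote the clique number of $G_m(\mathcal{H})$. Then exactly one of the following holds: (1) $\omega_m=2^m$ for all $m\in\mathbb{N}$; (2) there is a polynomial $P$ such that $\omega_m\le P(m)$ for all $m\in\mathbb{N}$.
   Context: For $m\in\mathbb{N}$, a dataset of size $m$ is a sequence $S=((x_1,y_1),\dots,(x_m,y_m))\in(\mathcal{X}\times\{0,1\})^m$; a hypothesis $h\in\{0,1\}^{\mathcal{X}}$ is consistent with $S$ if $h(x_i)=y_i$ for all $i$; $S$ is $\mathcal{H}$-realizable if some $h\in\mathcal{H}$ is consistent with $S$. We write $(x,y)\in S$ if $(x,y)=(x_i,y_i)$ for some $i$. Let $V_m(\mathcal{H})$ be the set of $\mathcal{H}$-realizable datasets of size $m$. The contradiction graph of order $m$, $G_m(\mathcal{H})$, is the undirected graph with vertex set $V_m(\mathcal{H})$ in which two datasets $S,S'$ are adjacent iff there is $x\in\mathcal{X}$ with $(x,0)\in S$ and $(x,1)\in S'$. The clique number of a graph is the supremum of the sizes of its cliques. *)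

(* Defs.v *)
From HB Require Import structures.
From mathcomp Require Import all_boot all_order all_algebra.
From mathcomp Require Import Rstruct.
From Stdlib Require Import Rdefinitions.
From Stdlib Require List.
Set Implicit Arguments. Unset Strict Implicit. Unset Printing Implicit Defensive.
Import GRing.Theory Num.Theory.
Local Open Scope ring_scope.

Definition dataset (X : Type) := seq (X * bool).

Definition consistent (X : Type) (h : X -> bool) (S : dataset X) : Prop :=
  forall p, List.In p S -> h p.1 = p.2.

Definition realizable (X : Type) (H : (X -> bool) -> Prop) (S : dataset X) : Prop :=
  exists h, H h /\ consistent h S.

(* vertices of G_m(H): H-realizable datasets of size m *)
Definition vertex (X : Type) (H : (X -> bool) -> Prop) (m : nat) (S : dataset X) : Prop :=
  size S = m /\ realizable H S.

Definition contradicts (X : Type) (S S' : dataset X) : Prop :=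
  exists x, List.In (x, false) S /\ List.In (x, true) S'.

Definition adjacent (X : Type) (S S' : dataset X) : Prop :=
  contradicts S S' \/ contradicts S' S.

Definition has_clique (X : Type) (H : (X -> bool) -> Prop) (m k : nat) : Prop :=
  exists f : 'I_k -> dataset X,
    injective f /\ (forall i, vertex H m (f i)) /\
    (forall i j, i != j -> adjacent (f i) (f j)).

(* clique number of G_m(H) (a supremum, possibly infinite) is equal to k *)
Definition clique_number_eq (X : Type) (H : (X -> bool) -> Prop) (m k : nat) : Prop :=
  has_clique H m k /\ (forall n, has_clique H m n -> leq n k).

Definition clique_number_le (X : Type) (H : (X -> bool) -> Prop) (m : nat) (r : R) : Prop :=
  forall n, has_clique H m n -> (n%:R <= r).

(* Main.v *)
Require Import Defs.
From HB Require Import structures.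
From mathcomp Require Import all_boot all_order all_algebra.
From mathcomp Require Import Rstruct.
From Stdlib Require Import Rdefinitions.
From Stdlib Require Import Classical ClassicalEpsilon.
From mathcomp Require Import zify.
Import GRing.Theory Num.Theory.
Local Notation "m ^ n" := (expn m n) : nat_scope.

Section Helpers.
Context {X : Type}.

Definition pb (P : Prop) : bool := if excluded_middle_informative P then true else false.
Lemma pbP (P : Prop) : reflect P (pb P).
Proof. rewrite /pb; case: excluded_middle_informative => h; constructor => //. Qed.

Fixpoint shatH (H : (X -> bool) -> Prop) (n : nat) : Prop :=
  match n with
  | 0 => exists h, H h
  | n'.+1 => exists x, shatH (fun h => H h /\ h x = false) n' /\
                       shatH (fun h => H h /\ h x = true) n'
  end.

Definition Gx (G : dataset X -> Prop) x c := fun S => G S /\ List.In (x, c) S.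

Fixpoint shatP (G : dataset X -> Prop) (n : nat) : Prop :=
  match n with
  | 0 => exists S, G S
  | n'.+1 => exists x, shatP (Gx G x false) n' /\ shatP (Gx G x true) n'
  end.

Lemma shatH_mono n : forall (H H' : (X -> bool) -> Prop),
  (forall h, H h -> H' h) -> shatH H n -> shatH H' n.
Proof.
elim: n => [|n IH] H H' HH /=.
  by case=> h /HH; exists h.
case=> x [h0 h1]; exists x; split.
  by apply: IH h0 => h [/HH]; split.
by apply: IH h1 => h [/HH]; split.
Qed.

Lemma shatH_down n : forall H, shatH H n.+1 -> shatH H n.
Proof.
elim: n => [|n IH] H /=.
  by case=> x [[h [Hh _]] _]; exists h.
by case=> x [h0 h1]; exists x; split; apply: IH.
Qed.

Lemma In_cons_sub (a : X * bool) (S : dataset X) p : List.In p S -> List.In p (a :: S).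
Proof. by right. Qed.

Lemma adjacent_cons a b (S S' : dataset X) : adjacent S S' -> adjacent (a :: S) (b :: S').
Proof.
by case=> [[x [h1 h2]]|[x [h1 h2]]]; [left|right]; exists x; split; right.
Qed.

Lemma constructA n : forall H, shatH H n -> exists L : seq (dataset X),
  (size L = 2 ^ n)%N /\ (forall i, i < size L -> vertex H n (nth [::] L i)) /\
  (forall i j, i < size L -> j < size L -> i != j -> adjacent (nth [::] L i) (nth [::] L j)).
Proof.
elim: n => [|n IH] H /=.
  case=> h Hh; exists [:: [::]]; split => //; split.
    case=> // _; split => //; exists h; split => // p [].
  by case=> [|[]] // [|[]].
case=> x [/IH [L0 [s0 [v0 a0]]] /IH [L1 [s1 [v1 a1]]]].
exists (map (cons (x, false)) L0 ++ map (cons (x, true)) L1).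
rewrite size_cat !size_map s0 s1.
split; first by rewrite expnS mul2n addnn.
have nthE : forall i, i < 2 ^ n + 2 ^ n -> nth [::] (map (cons (x, false)) L0 ++ map (cons (x, true)) L1) i =
   if i < 2 ^ n then (x, false) :: nth [::] L0 i else (x, true) :: nth [::] L1 (i - 2 ^ n).
  move=> i hi2; rewrite nth_cat size_map s0; case: ifP => hi.
    by rewrite (nth_map [::]) // s0.
  by rewrite (nth_map [::]) // s1; lia.
split.
  move=> i hi; rewrite nthE //; case: ifP => hin.
    have [|sz [h [[Hh hx] hc]]] := v0 i; first by rewrite s0.
    split; first by rewrite /= sz.
    exists h; split => // p /= [<-|/hc] //.
  have [|sz [h [[Hh hx] hc]]] := v1 (i - 2 ^ n); first by rewrite s1; lia.
  split; first by rewrite /= sz.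
  exists h; split => // p /= [<-|/hc] //.
move=> i j hi hj hij; rewrite !nthE //.
case: ifP => hin; case: ifP => hjn.
- by apply: adjacent_cons; apply: a0; rewrite ?s0.
- by left; exists x; split; left.
- by right; exists x; split; left.
- apply: adjacent_cons; apply: a1; rewrite ?s1; lia.
Qed.


Lemma shatP_H n : forall (G : dataset X -> Prop) H,
  (forall S, G S -> realizable H S) -> shatP G n -> shatH H n.
Proof.
elim: n => [|n IH] G H GH /=.
  by case=> S /GH [h [Hh _]]; exists h.
case=> x [h0 h1]; exists x; split.
  apply: IH h0 => S [/GH [h [Hh Hc]] Hin]; exists h; split => //; split => //.
  exact: (Hc _ Hin).
apply: IH h1 => S [/GH [h [Hh Hc]] Hin]; exists h; split => //; split => //.
exact: (Hc _ Hin).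
Qed.


Lemma In_pos (a : X * bool) (s : dataset X) : List.In a s ->
  exists p, p < size s /\ ohead (drop p s) = Some a.
Proof.
elim: s => [|b s IH] //= [<-|/IH [p [hp hd]]]; first by exists 0.
by exists p.+1.
Qed.

Lemma sum_bool_card k (P : pred 'I_k) : \sum_j (P j : nat) = #|[set j | P j]|.
Proof.
rewrite -sum1dep_card [RHS]big_mkcond /=; apply: eq_bigr => j _; by case: (P j).
Qed.

Lemma exists_le_sum m (P : pred 'I_m) : ([exists p, P p] : nat) <= \sum_p (P p : nat).
Proof.
case: existsP => [[p hp]|_] //=.
by rewrite (bigD1 p) //= hp.
Qed.

Fixpoint gb (m d : nat) : nat := match d with 0 => 1 | d'.+1 => 2 * m * gb m d' + 1 end.

Lemma subfam k (f : 'I_k -> dataset X) (A : {set 'I_k}) :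
  (forall i j, i != j -> adjacent (f i) (f j)) ->
  forall t t' : 'I_#|A|, t != t' -> adjacent (f (enum_val t)) (f (enum_val t')).
Proof.
move=> hp t t' htt; apply: hp; apply: contra htt => /eqP /enum_val_inj ->; done.
Qed.

Lemma count_bound m d : forall (G : dataset X -> Prop), ~ shatP G d.+1 ->
  forall k (f : 'I_k -> dataset X), (forall i, G (f i)) -> (forall i, size (f i) <= m) ->
  (forall i j, i != j -> adjacent (f i) (f j)) -> k <= gb m d.
Proof.
elim: d => [|d IH] G nsh k f hG hs hp.
  case: k f hG hs hp => [|[|k]] // f hG hs hp.
  have h01 : (ord0 : 'I_k.+2) != Ordinal (isT : 1 < k.+2) by [].
  exfalso; apply: nsh.
  case: (hp _ _ h01) => [[x [h1 h2]]|[x [h1 h2]]]; exists x; split.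
  - by exists (f ord0).
  - by exists (f (Ordinal (isT : 1 < k.+2))).
  - by exists (f (Ordinal (isT : 1 < k.+2))).
  - by exists (f ord0).
pose light x c := ~ shatP (Gx G x c) d.+1.
pose Cp (p : 'I_m) i j := pb (exists x b, ohead (drop p (f i)) = Some (x, b) /\
   List.In (x, ~~ b) (f j) /\ light x (~~ b)).
pose Cany i j := [exists p, Cp p i j].
have cover : forall i j, i != j -> Cany i j || Cany j i.
  have one : forall i j x, List.In (x, false) (f i) -> List.In (x, true) (f j) ->
       Cany i j || Cany j i.
    move=> i j x hi hj.
    have [lf|lt] : light x false \/ light x true.
      apply: NNPP => hn; apply: nsh; exists x; split; apply: NNPP => hh; apply: hn; by [left|right].
    - apply/orP; right; have [p [hp1 hp2]] := In_pos _ _ hj.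
      apply/existsP; exists (Ordinal (leq_trans hp1 (hs j))); apply/pbP.
      by exists x, true.
    - apply/orP; left; have [p [hp1 hp2]] := In_pos _ _ hi.
      apply/existsP; exists (Ordinal (leq_trans hp1 (hs i))); apply/pbP.
      by exists x, false.
  move=> i j /hp [[x [h1 h2]]|[x [h1 h2]]].
    exact: one h1 h2.
  by rewrite orbC; apply: one h1 h2.
have cardp : forall i p, \sum_j (Cp p i j : nat) <= gb m d.
  move=> i p; rewrite sum_bool_card.
  case E : (ohead (drop p (f i))) => [[x b]|].
    case: (classic (light x (~~ b))) => hl.
      apply: (IH (Gx G x (~~ b)) hl _ (fun t => f (enum_val t))) => [t||].
      - have := enum_valP t; rewrite inE => /pbP [y [c [hE [hin _]]]].
        move: hE; rewrite E => -[-> ->]; split => //.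
      - by move=> t; apply: hs.
      - exact: subfam.
    suff -> : [set j | Cp p i j] = set0 by rewrite cards0.
    apply/setP => j; rewrite !inE.
    apply/pbP => -[y [c [hE [_ hl']]]]; move: hE hl'; rewrite E => -[<- <-] hl'.
    exact: hl hl'.
  suff -> : [set j | Cp p i j] = set0 by rewrite cards0.
    apply/setP => j; rewrite !inE.
  by apply/pbP => -[y [c [hE _]]]; rewrite E in hE.
pose a i := \sum_j (Cany i j : nat).
have ha : forall i, a i <= m * gb m d.
  move=> i; rewrite /a.
  apply: (@leq_trans (\sum_j \sum_(p < m) (Cp p i j : nat))).
    by apply: leq_sum => j _; apply: exists_le_sum.
  rewrite exchange_big /=.
  apply: (@leq_trans (\sum_(p < m) gb m d)); first by apply: leq_sum => p _; apply: cardp.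
  by rewrite sum_nat_const card_ord.
have hk : forall i, k <= 1 + (a i + \sum_j (Cany j i : nat)).
  move=> i.
  apply: (@leq_trans (\sum_(j < k) 1)); first by rewrite sum_nat_const card_ord muln1.
  have e1 : \sum_(j < k) ((j == i) : nat) = 1.
    by rewrite (bigD1 i) //= eqxx big1 // => j /negbTE ->.
  rewrite -[X in X + _]e1.
  rewrite /a -!big_split /=; apply: leq_sum => j _.
  case: eqP => [->|/eqP hji] //=.
  by have := cover _ _ hji; case: (Cany j i); case: (Cany i j).
have hsum : k * k <= k + 2 * (k * (m * gb m d)).
  apply: (@leq_trans (\sum_(i < k) (1 + (a i + \sum_j (Cany j i : nat))))).
    apply: (@leq_trans (\sum_(i < k) k)); first by rewrite sum_nat_const card_ord.
    by apply: leq_sum => i _; apply: hk.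
  rewrite !big_split /= sum_nat_const card_ord muln1 leq_add2l.
  rewrite exchange_big /= -/(a _) addnn -mul2n leq_mul2l /=.
  rewrite exchange_big /=.
  apply: (@leq_trans (\sum_(i < k) (m * gb m d))); first by apply: leq_sum => i _; apply: ha.
  by rewrite sum_nat_const card_ord.
rewrite /=; nia.
Qed.


Definition selfcons (S : dataset X) := forall x, ~ (List.In (x, false) S /\ List.In (x, true) S).

Lemma In_filter (q : pred (X * bool)) a s : List.In a s -> q a -> List.In a (filter q s).
Proof.
elim: s => [|b s IH] /=; first by [].
case=> [->|h] hq; first by rewrite hq; left.
by case: (q b) => //=; [right|]; apply: IH.
Qed.

Lemma In_filter_inv (q : pred (X * bool)) a s : List.In a (filter q s) -> List.In a s.
Proof.
elim: s => [|b s IH] /=; first by [].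
case: (q b) => /=; last by move/IH; right.
by case=> [->|/IH]; [left|right].
Qed.

Lemma has_In (q : pred (X * bool)) a s : List.In a s -> q a -> has q s.
Proof.
elim: s => [|b s IH] /=; first by [].
case=> [->|h] hq; first by rewrite hq.
by rewrite IH ?orbT.
Qed.

Lemma filter_id_In (q : pred (X * bool)) s : (forall p, List.In p s -> q p) -> filter q s = s.
Proof.
elim: s => [|b s IH] //= h; rewrite h; last by left.
by rewrite IH // => p hp; apply: h; right.
Qed.

Lemma size_filter_lt (q : pred (X * bool)) a s : List.In a s -> ~~ q a -> size (filter q s) < size s.
Proof.
move=> hin hq; rewrite size_filter -(count_predC q s) -addn1 leq_add2l.
by rewrite -has_count; exact: (@has_In (predC q) _ _ hin hq).
Qed.

Lemma In_size (a : X * bool) s : List.In a s -> 0 < size s.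
Proof. by case: s. Qed.

Definition rm x (S : dataset X) := filter (fun p => ~~ pb (p.1 = x)) S.

Lemma kraft_triv m k (f : 'I_k -> dataset X) :
  (forall i x b, ~ List.In (x, b) (f i)) ->
  (forall i, size (f i) <= m) ->
  (forall i j, i != j -> adjacent (f i) (f j)) ->
  \sum_i 2 ^ (m - size (f i)) <= 2 ^ m.
Proof.
move=> hn hs hp.
case: k f hn hs hp => [|[|k]] f hn hs hp.
- by rewrite big_ord0.
- by rewrite big_ord1; apply: leq_pexp2l => //; apply: leq_subr.
- have h01 : (ord0 : 'I_k.+2) != Ordinal (isT : 1 < k.+2) by [].
  exfalso; case: (hp _ _ h01) => [[x [h1 h2]]|[x [h1 h2]]]; exact: hn h1.
Qed.

Lemma kraft T : forall m k (f : 'I_k -> dataset X),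
  \sum_i size (f i) <= T -> (forall i, size (f i) <= m) -> (forall i, selfcons (f i)) ->
  (forall i j, i != j -> adjacent (f i) (f j)) ->
  \sum_i 2 ^ (m - size (f i)) <= 2 ^ m.
Proof.
elim: T => [|T IH] m k f hT hs hc hp.
  apply: kraft_triv => // i x b hin.
  have := In_size _ _ hin; have : size (f i) <= 0.
    by apply: leq_trans hT; rewrite (bigD1 i) //= leq_addr.
  by case: (size (f i)).
case: (classic (exists i x b, List.In (x, b) (f i))) => [[i0 [x [b hin0]]]|hno]; last first.
  apply: kraft_triv => // i y c hin; apply: hno; by exists i, y, c.
pose Ac c := [set i | ~~ pb (List.In (x, ~~ c) (f i))].
have half : forall c, \sum_(i in Ac c) 2 ^ (m - size (rm x (f i))) <= 2 ^ m.
  move=> c; rewrite big_enum_val /=.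
  apply: (IH m _ (fun t => rm x (f (enum_val t)))).
  - rewrite -(big_enum_val (fun i => size (rm x (f i)))) /=.
    rewrite -ltnS; apply: leq_trans hT.
    apply: (@leq_trans (\sum_i ((if i \in Ac c then size (rm x (f i)) else 0) + (i == i0)))).
      have e1 : \sum_(i < k) ((i == i0) : nat) = 1.
        by rewrite (bigD1 i0) //= eqxx big1 // => j /negbTE ->.
      by rewrite big_split /= -big_mkcond /= e1 addn1 ltnS.
    apply: leq_sum => i _.
    have hsr : size (rm x (f i)) <= size (f i) by rewrite size_filter count_size.
    case: eqP => [->|_]; last by rewrite addn0; case: ifP.
    rewrite addn1; case: ifP => hA; last exact: (In_size _ _ hin0).
    apply: (size_filter_lt _ _ _ hin0) => /=; rewrite negbK; exact/pbP.
  - move=> t; apply: leq_trans (hs (enum_val t)); by rewrite size_filter count_size.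
  - move=> t y [h1 h2]; apply: (hc (enum_val t) y); split; [exact: (In_filter_inv _ _ _ h1) | exact: (In_filter_inv _ _ _ h2)].
  - move=> t t' htt.
    have hij : enum_val t != enum_val t' by apply: contra htt => /eqP /enum_val_inj ->.
    have key : forall i j, i \in Ac c -> j \in Ac c -> forall y, List.In (y, false) (f i) ->
        List.In (y, true) (f j) -> contradicts (rm x (f i)) (rm x (f j)).
      move=> i j; rewrite !inE => /pbP hi /pbP hj y h1 h2.
      have hy : y <> x.
        move=> e; subst y.
        have : ~~ c = false \/ ~~ c = true by case: (~~ c); [right|left].
        by case=> e; rewrite e in hi hj; [exact: hi h1|exact: hj h2].
      exists y; split; apply: In_filter => //=; by apply/negP => /pbP.
    case: (hp _ _ hij) => [[y [h1 h2]]|[y [h1 h2]]]; [left|right]; exact: (key _ _ (enum_valP _) (enum_valP _) _ h1 h2).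
have hsum : 2 * \sum_i 2 ^ (m - size (f i)) <= 2 * 2 ^ m.
  apply: (@leq_trans (\sum_(i in Ac false) 2 ^ (m - size (rm x (f i))) +
                      \sum_(i in Ac true) 2 ^ (m - size (rm x (f i))))); last first.
    by rewrite mul2n -addnn leq_add.
  rewrite (big_mkcond (fun i => i \in Ac false)) (big_mkcond (fun i => i \in Ac true)) -big_split /=.
  rewrite big_distrr /=; apply: leq_sum => i _; rewrite !inE.
  have hsi := hs i.
  have hlt : forall c, List.In (x, c) (f i) -> 2 * 2 ^ (m - size (f i)) <= 2 ^ (m - size (rm x (f i))).
    move=> c hin; have := size_filter_lt (fun p => ~~ pb (p.1 = x)) _ _ hin.
    rewrite /= negbK => /(_ (introT (pbP _) erefl)) hl.
    rewrite -expnS; apply: leq_pexp2l => //; rewrite /rm; lia.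
  case: (pbP (List.In (x, true) (f i))) => ht; case: (pbP (List.In (x, false) (f i))) => hf /=.
  - by exfalso; apply: (hc i x).
  - by rewrite add0n; apply: (hlt true).
  - by rewrite addn0; apply: (hlt false).
  - have -> : rm x (f i) = f i.
      apply: filter_id_In => -[y cc] hpp; apply/negP => /pbP /= e; subst y.
      by case: cc hpp => hpp; [apply: hf|apply: ht].
    by rewrite mul2n addnn.
by rewrite leq_pmul2l in hsum.
Qed.

End Helpers.

Lemma exp_beats (C n : nat) : exists m : nat, leq 1 m /\ ltn (muln C (expn m n)) (expn 2 m).
Proof.
pose t := (2 * n + C + 1).
have ht : (t < 2 ^ t) := ltn_expl t (isT : (1 < 2)).
exists (2 ^ (2 * t)); split; first by rewrite ssrnat.expn_gt0.
rewrite -expnM.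
apply: (@leq_trans (2 ^ C * 2 ^ (2 * t * n)).+1).
  by rewrite ltnS leq_mul2r (ltnW (ltn_expl C (isT : (1 < 2)))) orbT.
rewrite -expnD.
apply: (@leq_trans (2 ^ (C + 2 * t * n).+1)); first by rewrite expnS; have := ssrnat.expn_gt0 2 (C + 2 * t * n); rewrite /=; lia.
rewrite leq_exp2l //.
have e : (2 ^ (2 * t) = 2 ^ t * 2 ^ t) by rewrite mul2n -addnn expnD.
rewrite e; move: ht; set a := (2 ^ t) => ht.
rewrite /t in ht *; nia.
Qed.

Import Order.TTheory.
Local Open Scope ring_scope.

Lemma poly_bound (P : {poly R}) : exists C n : nat, forall m : nat, leq 1 m ->
  P.[m%:R] <= (muln C (expn m n))%:R.
Proof.
pose S := \sum_(i < size P) `|P`_i|.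
have S0 : 0 <= S by apply: sumr_ge0 => i _; exact: normr_ge0.
exists (Num.Def.archi_bound S), (size P) => m hm.
have x1 : 1 <= m%:R :> R by rewrite ler1n.
rewrite natrM natrX horner_coef.
apply: (@le_trans _ _ (S * m%:R ^+ size P)).
  rewrite /S mulr_suml; apply: ler_sum => i _.
  apply: (@le_trans _ _ (`|P`_i| * m%:R ^+ i)).
    apply: ler_wpM2r; first by apply: exprn_ge0; apply: le_trans x1.
    exact: ler_norm.
  apply: ler_wpM2l; first exact: normr_ge0.
  by apply: ler_weXn2l => //; apply: ltnW.
apply: ler_wpM2r; first by apply: exprn_ge0; apply: le_trans x1.
exact: ltW (archi_boundP S0).
Qed.

Fixpoint polyg (d : nat) : {poly R} := match d with 0 => 1 | d'.+1 => 2%:R * 'X * polyg d' + 1 end.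

Lemma polygE m d : (polyg d).[m%:R] = (gb m d)%:R.
Proof.
elim: d => [|d IH] /=; first by rewrite hornerC.
by rewrite !hornerE IH natrD !natrM.
Qed.

Theorem mainTheorem2 (X : Type) (H : (X -> bool) -> Prop) :
  let case1 := forall m : nat, clique_number_eq H m (expn 2 m) in
  let case2 := exists P : {poly R}, forall m : nat, clique_number_le H m P.[m%:R] in
  (case1 \/ case2) /\ ~ (case1 /\ case2).
Proof.
move=> case1 case2.
have upper : forall m n, has_clique H m n -> leq n (expn 2 m).
  move=> m n [f [_ [hv ha]]].
  have := kraft (\sum_i size (f i)) m _ f (leqnn _) _ _ ha.
  have hsz : forall i, size (f i) = m by move=> i; case: (hv i).
  under eq_bigr => i _ do rewrite hsz subnn expn0.
  rewrite sum_nat_const card_ord muln1; apply.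
  - by move=> i; rewrite hsz.
  - move=> i x [h1 h2]; have [_ [h [_ hc]]] := hv i.
    by have := hc _ h1; have := hc _ h2 => /= ->.
split; last first.
  move=> [c1 [P hP]].
  have [C [n hb]] := poly_bound P.
  have [m [hm hlt]] := exp_beats C n.
  have := hP m _ (proj1 (c1 m)).
  move/le_trans => /(_ _ (hb m hm)); rewrite ler_nat => hle.
  by move: (leq_ltn_trans hle hlt); rewrite ltnn.
case: (classic (forall n, shatH H n)) => [hall|hno].
  left => m; split; last exact: upper.
  have [L [hs [hv ha]]] := constructA m H (hall m).
  have hlt : forall i : 'I_(expn 2 m), leq (S i) (size L).
    by move=> i; rewrite hs ltn_ord.
  exists (fun i => nth [::] L i); split; last split.
  - move=> i j hij; apply/eqP; apply: contraT => hne.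
    have := ha i j (hlt i) (hlt j) hne; rewrite hij.
    have [_ [h [_ hc]]] := hv j (hlt j).
    by case=> [[x [h1 h2]]|[x [h1 h2]]]; have := hc _ h1; have := hc _ h2 => /= ->.
  - by move=> i; apply: hv.
  - by move=> i j hij; apply: ha.
right.
have [d hd] : exists d, ~ shatH H d.
  by apply: NNPP => hn; apply: hno => n; apply: NNPP => hn'; apply: hn; exists n.
have hd1 : ~ shatH H d.+1 by move/shatH_down.
exists (polyg d) => m n hc; rewrite polygE ler_nat.
case: hc => f [_ [hv ha]].
apply: (count_bound m d (realizable H) _ n f _ _ ha).
- by move=> hs; apply: hd1; apply: (shatP_H d.+1 (realizable H) H (fun S h => h)).
- by move=> i; case: (hv i).
- by move=> i; case: (hv i) => ->.
Qed.
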